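(* (i) Let $G$ be a graph, $c$ a Grundy-coloring of $G$ using $k$ colors, and $u$ a vertex with $c(u)=k$. Let $H$ be a subgraph of $G$ of minimum cardinality such that $u\in V(H)$ and the restriction of $c$ to $V(H)$ is a Grundy-coloring of $H$ with $k$ colors. Then $V(H)\subseteq B(u,k-1)\subseteq B(u,d_G(u))$. Moreover, either $V(H)\subseteq B(u,\Delta(u))$ (and hence $V(H)\subseteq V(G(u))$), or for some neighbor $w$ of $u$, $V(H)\subseteq B(w,\Delta(w))$ (and hence $V(H)\subseteq V(G(w))$). (ii) For any graph $G$, $\Gamma(G)=\max_{v\in V(G)}\Gamma(G(v))=\max_{v\in V(G)}\Gamma_{G(v)}(v)$.
   Context: Graphs are finite and simple. A Grundy-coloring of $G$ is a proper coloring with nonempty color classes $C_1,\ldots,C_k$ (color $i$ on $C_i$) such that for $i<j$ each vertex of $C_j$ has a neighbor in $C_i$; $\Gamma(G)$ is the maximum number of colors of a Grundy-coloring, and $\Gamma_G(v)$ is the maximum color of $v$ over Grundy-colorings of $G$. $d_G(v)$ is the degree and $d_G(u,v)$ the distance. $B(u,r)=\{v\in V(G): d_G(u,v)\le r\}$. For $u\in V(G)$, $\Delta(u)=\max\{d(v): v\in N(u),\ d(v)\le d(u)\}$, and $G(u)$ is the induced subgraph $G[B(u,\Delta(u))]$. *)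

(* Defs.v *)
(* Simple graph = symmetric irreflexive relation e on a finType T. *)
From mathcomp Require Import all_boot all_order.
Set Implicit Arguments. Unset Strict Implicit. Unset Printing Implicit Defensive.

Section Defs.
Variable T : finType.

Definition deg (e : rel T) (v : T) : nat := #|[set w | e v w]|.

Definition ball (e : rel T) (u : T) (r : nat) : {set T} :=
  iter r (fun A : {set T} => A :|: [set y | [exists x in A, e x y]]) [set u].

(* Delta(u) = max { d(v) : v in N(u), d(v) <= d(u) }  (0 if this set is empty) *)
Definition Delta (e : rel T) (u : T) : nat :=
  \max_(v | e u v && (deg e v <= deg e u)) deg e v.

(* vertex set of G(u) = G[B(u, Delta(u))] *)
Definition Gset (e : rel T) (u : T) : {set T} := ball e u (Delta e u).

(* c is a Grundy-coloring with colour classes C_1..C_k of the graph with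
   vertex set S and edge relation f (only vertices of S matter). *)
Definition grundyb (S : {set T}) (f : rel T) (k : nat) (c : T -> nat) : bool :=
  [&& [forall x in S, (0 < c x) && (c x <= k)],
      [forall i : 'I_k.+1, (0 < i) ==> [exists x in S, c x == i]],
      [forall x in S, forall y in S, f x y ==> (c x != c y)] &
      [forall x in S, forall i : 'I_k.+1,
          ((0 < i) && (i < c x)) ==> [exists y in S, f x y && (c y == i)]]].

Definition subgraph (e : rel T) (S : {set T}) (f : rel T) : Prop :=
  symmetric f /\ forall x y, f x y -> [/\ x \in S, y \in S & e x y].

(* Grundy number of the graph (S, f): a Grundy-colouring uses at most #|S|
   colours, so colourings with values in 'I_(#|S|.+1) are enough. *)
Definition gamma (S : {set T}) (f : rel T) : nat :=
  \max_(k < #|S|.+1 | [exists c : {ffun T -> 'I_(#|S|.+1)},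
                         grundyb S f k (fun x => c x)]) k.

Definition gamma_v (S : {set T}) (f : rel T) (v : T) : nat :=
  \max_(c : {ffun T -> 'I_(#|S|.+1)} |
          [exists k : 'I_(#|S|.+1), grundyb S f k (fun x => c x)]) (c v : nat).

End Defs.

(* Main.v *)
Require Import Defs.
From mathcomp Require Import all_boot all_order.
From mathcomp Require Import zify.
Set Implicit Arguments. Unset Strict Implicit. Unset Printing Implicit Defensive.

Section Ball.
Variable T : finType.
Implicit Types (R : rel T) (y x z : T).

Lemma ballS R y n : ball R y n.+1 = ball R y n :|: [set z | [exists x in ball R y n, R x z]].
Proof. by []. Qed.
Lemma ball0 R y : ball R y 0 = [set y].
Proof. by []. Qed.
Lemma ball_center R y n : y \in ball R y n.
Proof. elim: n => [|n IH]; first by rewrite ball0 set11. by rewrite ballS inE IH. Qed.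
Lemma ball_sub1 R y n : ball R y n \subset ball R y n.+1.
Proof. by rewrite ballS subsetUl. Qed.
Lemma ball_mono R y m n : m <= n -> ball R y m \subset ball R y n.
Proof.
elim: n => [|n IH]; first by rewrite leqn0 => /eqP->.
rewrite leq_eqVlt => /orP[/eqP->//|]; rewrite ltnS => /IH H.
exact: subset_trans H (ball_sub1 _ _ _).
Qed.
Lemma ball_step R y n x z : x \in ball R y n -> R x z -> z \in ball R y n.+1.
Proof. by move=> xb Rxz; rewrite ballS !inE; apply/orP; right; apply/existsP; exists x; rewrite xb. Qed.
Lemma ball_inv R y n z : z \in ball R y n.+1 ->
  z \in ball R y n \/ exists2 x, x \in ball R y n & R x z.
Proof.
rewrite ballS !inE => /orP[->|/existsP[x /andP[xb Rxz]]]; [by left|right; by exists x].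
Qed.
Lemma ball0_inv R y z : z \in ball R y 0 -> z = y.
Proof. by rewrite ball0 inE => /eqP. Qed.
Lemma ball_trans R y x a b z : x \in ball R y a -> z \in ball R x b -> z \in ball R y (a + b).
Proof.
move=> xb; elim: b z => [|b IH] z; first by move/ball0_inv->; rewrite addn0.
case/ball_inv=> [/IH zb| [t /IH tb Rtz]].
  by rewrite addnS; apply: (subsetP (ball_sub1 _ _ _)).
by rewrite addnS; apply: ball_step Rtz.
Qed.
Lemma ball_rel R1 R2 y n : (forall a b, R1 a b -> R2 a b) -> ball R1 y n \subset ball R2 y n.
Proof.
move=> H; apply/subsetP; elim: n => [|n IH] z; first by move/ball0_inv->; apply: ball_center.
case/ball_inv=> [/IH zb|[t /IH tb Rtz]]; first by apply: (subsetP (ball_sub1 _ _ _)).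
by apply: ball_step tb (H _ _ Rtz).
Qed.
Lemma ball_ind (P : T -> Prop) R y n : P y -> (forall a b, P a -> R a b -> P b) ->
  forall x, x \in ball R y n -> P x.
Proof.
move=> Py H; elim: n => [|n IH] z; first by move/ball0_inv->.
by case/ball_inv=> [/IH //|[t /IH Pt Rtz]]; apply: H Rtz.
Qed.

Definition dr (f : rel T) (c : T -> nat) : rel T := fun a b => f a b && (c b < c a).

Lemma desc_inv f c y n x : x \in ball (dr f c) y n ->
  c x <= c y /\ x \in ball (dr f c) y (c y - c x).
Proof.
elim: n x => [|n IH] x; first by move/ball0_inv->; rewrite subnn leqnn ball_center.
case/ball_inv=> [/IH //|[z /IH [czy zb] d]].
have cxz : c x < c z by case/andP: d.
split; first by apply: leq_trans (ltnW cxz) czy.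
have le : (c y - c z).+1 <= c y - c x by lia.
apply: (subsetP (ball_mono _ _ le)); exact: ball_step zb d.
Qed.
Lemma desc_eq f c y n x : x \in ball (dr f c) y n -> c x = c y -> x = y.
Proof. by case/desc_inv=> _ + E; rewrite E subnn => /ball0_inv. Qed.
Lemma desc_le f c y n x : x \in ball (dr f c) y n -> c x <= c y.
Proof. by case/desc_inv. Qed.
Lemma desc_closed f c y x z : x \in ball (dr f c) y (c y) -> 0 < c x -> dr f c x z ->
  z \in ball (dr f c) y (c y).
Proof.
case/desc_inv=> cxy xb cx0 d.
have le : (c y - c x).+1 <= c y by lia.
apply: (subsetP (ball_mono _ _ le)); exact: ball_step xb d.
Qed.
Lemma desc_dist (e f : rel T) c y n x : (forall a b, f a b -> e a b) ->
  x \in ball (dr f c) y n -> 0 < c x -> x \in ball e y (c y - 1).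
Proof.
move=> fe /desc_inv[cxy xb] cx0.
have H : forall a b, dr f c a b -> e a b by move=> a b /andP[/fe].
have le : c y - c x <= c y - 1 by lia.
by apply: (subsetP (ball_rel _ _ H)); apply: (subsetP (ball_mono _ _ le)) xb.
Qed.

Lemma grundybP (S : {set T}) (f : rel T) k (c : T -> nat) :
  reflect [/\ (forall x, x \in S -> 0 < c x <= k),
              (forall i, 0 < i <= k -> exists2 x, x \in S & c x = i),
              (forall x y, x \in S -> y \in S -> f x y -> c x <> c y) &
              (forall x i, x \in S -> 0 < i < c x -> exists2 y, y \in S & f x y /\ c y = i)]
          (grundyb S f k c).
Proof.
apply: (iffP idP).
  case/and4P=> /forallP H1 /forallP H2 /forallP H3 /forallP H4; split.
  - by move=> x xS; move/implyP: (H1 x); apply.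
  - move=> i /andP[i0 ik]; move/implyP: (H2 (Ordinal (ik : i < k.+1))) => /(_ i0).
    by case/existsP=> x /andP[xS /eqP cx]; exists x.
  - move=> x y xS yS fxy; move/implyP: (H3 x) => /(_ xS) /forallP /(_ y) /implyP /(_ yS).
    by move/implyP/(_ fxy)/eqP.
  - move=> x i xS /andP[i0 ix].
    have ik : i < k.+1 by move/implyP: (H1 x) => /(_ xS) /andP[_ ?]; lia.
    move/implyP: (H4 x) => /(_ xS) /forallP /(_ (Ordinal ik)) /implyP.
    rewrite /= i0 ix => /(_ isT) /existsP [y /and3P[yS fxy /eqP cy]].
    by exists y.
case=> H1 H2 H3 H4; apply/and4P; split.
- by apply/forallP=> x; apply/implyP=> /H1.
- apply/forallP=> i; apply/implyP=> i0.
  have [|x xS cx] := H2 i; first by rewrite i0 -ltnS ltn_ord.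
  by apply/existsP; exists x; rewrite xS cx eqxx.
- apply/forallP=> x; apply/implyP=> xS; apply/forallP=> y; apply/implyP=> yS.
  by apply/implyP=> fxy; apply/eqP; apply: H3.
- apply/forallP=> x; apply/implyP=> xS; apply/forallP=> i; apply/implyP=> /andP[i0 ix].
  have [|y yS [fxy cy]] := H4 x i xS; first by rewrite i0.
  by apply/existsP; exists y; rewrite yS fxy cy eqxx.
Qed.
End Ball.

Section Ext.
Variable T : finType.
Variable e : rel T.
Hypothesis e_sym : symmetric e.
Hypothesis e_irr : irreflexive e.

Lemma count_lb (A : {set T}) m (h : T -> nat) :
  (forall i, 0 < i <= m -> exists2 x, x \in A & h x = i) -> m <= #|A|.
Proof.
move=> H; rewrite -(size_iota 1 m) -(size_image h A).
apply: uniq_leq_size; first exact: iota_uniq.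
move=> i; rewrite mem_iota => Hi.
have [|x xA <-] := H i; first by lia.
exact: image_f.
Qed.

Lemma grundyb_ext (S : {set T}) f f' k c c' :
  (forall x, x \in S -> c x = c' x) ->
  (forall x y, x \in S -> y \in S -> f x y = f' x y) ->
  grundyb S f k c -> grundyb S f' k c'.
Proof.
move=> Ec Ef /grundybP[H1 H2 H3 H4]; apply/grundybP; split.
- by move=> x xS; rewrite -Ec //; apply: H1.
- by move=> i /H2[x xS cx]; exists x; rewrite // -Ec.
- by move=> x y xS yS; rewrite -Ef // -!Ec //; apply: H3.
- move=> x i xS; rewrite -Ec // => /(H4 _ _ xS)[y yS [fxy cy]].
  by exists y; rewrite // -Ef // -Ec.
Qed.

Definition PG (S : {set T}) (c : T -> nat) : Prop :=
  forall x, x \in S -> [/\ 0 < c x, forall y, y \in S -> e x y -> c x <> c y &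
     forall i, 0 < i < c x -> exists2 y, y \in S & e x y /\ c y = i].

Lemma grundy_PG (S : {set T}) k c : grundyb S e k c -> PG S c.
Proof.
case/grundybP=> H1 H2 H3 H4 x xS; split.
- by case/andP: (H1 x xS).
- by move=> y; apply: H3.
- by move=> i; apply: H4.
Qed.

Lemma extend_one (S : {set T}) c v : PG S c -> v \notin S ->
  exists c', PG (v |: S) c' /\ forall x, x \in S -> c' x = c x.
Proof.
move=> pg vS.
pose P := fun j => (0 < j) && [forall y in S, e v y ==> (c y != j)].
have exP : exists j, P j.
  exists (\max_(y in S) c y).+1; rewrite /P /=; apply/forallP=> y; apply/implyP=> yS.
  apply/implyP=> _; have H := @leq_bigmax_cond _ (mem S) c y yS; by rewrite neq_ltn ltnS H.
case: (ex_minnP exP) => m /andP[m0 /forallP Hm] minm.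
exists (fun x => if x == v then m else c x); split; last first.
  by move=> x xS; case: eqP => // xv; by rewrite -xv xS in vS.
move=> x; rewrite in_setU1 => /orP[/eqP->|xS].
  rewrite eqxx; split => //.
  - move=> y; rewrite in_setU1 => /orP[/eqP->|yS]; first by rewrite e_irr.
    move=> evy; have yv : (y == v) = false by apply/eqP=> yv; rewrite yv e_irr in evy.
    rewrite yv; move/implyP: (Hm y) => /(_ yS) /implyP /(_ evy) /eqP; by auto.
  - move=> i /andP[i0 im]; case Pi: (P i).
      by move: (minm i Pi); rewrite leqNgt im.
    move: Pi; rewrite /P i0 /= => /negbT /forallPn [y].
    rewrite negb_imply => /andP[yS]; rewrite negb_imply negbK => /andP[evy /eqP cy].
    exists y; first by rewrite in_setU1 yS orbT.
    have yv : (y == v) = false by apply/eqP=> yv; rewrite yv e_irr in evy.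
    by rewrite yv.
have xv : (x == v) = false by apply/eqP=> xv; rewrite -xv xS in vS.
rewrite xv; case: (pg x xS) => cx0 Hp Hg; split => //.
- move=> y; rewrite in_setU1 => /orP[/eqP->|yS]; last first.
    have yv : (y == v) = false by apply/eqP=> yv; rewrite -yv yS in vS.
    by rewrite yv; apply: Hp.
  rewrite eqxx => exv; rewrite e_sym in exv.
  by move/implyP: (Hm x) => /(_ xS) /implyP /(_ exv) /eqP.
- move=> i /Hg[y yS [exy cy]]; exists y; first by rewrite in_setU1 yS orbT.
  have yv : (y == v) = false by apply/eqP=> yv; rewrite -yv yS in vS.
  by rewrite yv.
Qed.

Lemma extend_all (B S : {set T}) c : S \subset B -> PG S c ->
  exists c', PG B c' /\ forall x, x \in S -> c' x = c x.
Proof.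
move Hn: #|B :\: S| => n; elim: n S c Hn => [|n IH] S c Hn SB pg.
  have BS : B \subset S by rewrite -setD_eq0 -cards_eq0 Hn.
  have -> : B = S by apply/eqP; rewrite eqEsubset BS SB.
  by exists c.
have [v vBS] : exists v, v \in B :\: S by apply/set0Pn; rewrite -cards_eq0 Hn.
move: (vBS); rewrite inE => /andP[vS vB].
have [c1 [pg1 E1]] := extend_one pg vS.
have Hn1 : #|B :\: (v |: S)| = n.
  move: Hn; rewrite (cardsD1 v) vBS add1n => -[<-].
  by rewrite setDDl setUC.
have SB1 : v |: S \subset B by rewrite subUset sub1set vB SB.
have [c2 [pg2 E2]] := IH _ _ Hn1 SB1 pg1.
exists c2; split => // x xS; rewrite E2 ?E1 //.
by rewrite in_setU1 xS orbT.
Qed.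

Lemma PG_grundy (B : {set T}) c : PG B c -> grundyb B e (\max_(x in B) c x) c.
Proof.
move=> pg; apply/grundybP; split.
- by move=> x xB; case: (pg x xB) => -> _ _; rewrite leq_bigmax_cond.
- move=> i /andP[i0 iM].
  have : 0 < #|B|.
    rewrite card_gt0; apply/set0Pn.
    case: (set_0Vmem B) => [B0|[x xB]]; last by exists x.
    by move: iM; rewrite B0 big_set0; lia.
  case/(eq_bigmax_cond c) => x xB Mx.
  move: iM; rewrite Mx leq_eqVlt => /orP[/eqP ->|ix]; first by exists x.
  case: (pg x xB) => _ _ /(_ i) []; first by rewrite i0 ix.
  by move=> y yB [_ cy]; exists y.
- by move=> x y xB; case: (pg x xB) => _ H _; apply: H.
- by move=> x i xB; case: (pg x xB) => _ _; apply.
Qed.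

Lemma grundy_bound (B : {set T}) k c : grundyb B e k c -> k <= #|B|.
Proof. by case/grundybP=> _ H2 _ _; apply: (count_lb (h := c)). Qed.

Lemma mono_gamma (B S : {set T}) k c v : S \subset B -> grundyb S e k c -> v \in S ->
  k <= gamma B e /\ c v <= gamma_v B e v.
Proof.
move=> SB g vS.
have [c' [pg E]] := extend_all SB (grundy_PG g).
have g' := PG_grundy pg.
set M := \max_(x in B) c' x in g'.
have MB : M < #|B|.+1 by rewrite ltnS; apply: grundy_bound g'.
pose cf : {ffun T -> 'I_(#|B|.+1)} := [ffun x => inord (c' x)].
have gf : grundyb B e M (fun x => cf x).
  apply: grundyb_ext (g') => // x xB; rewrite ffunE inordK // ltnS.
  by case/grundybP: g' => /(_ x xB) /andP[_ H] _ _ _; apply: leq_trans H _; rewrite -ltnS.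
have kM : k <= M.
  case: k g => [//|k] g.
  case/grundybP: (g) => _ /(_ k.+1 (leqnn _)) [x xS cx] _ _.
  by rewrite -cx -E //; apply: leq_bigmax_cond; apply: (subsetP SB).
split.
  apply: leq_trans kM _.
  apply: (@leq_bigmax_cond _ _ (fun i : 'I_(#|B|.+1) => nat_of_ord i) (Ordinal MB)).
  by apply/existsP; exists cf.
have -> : c v = cf v.
  have cvB : c' v < #|B|.+1.
    by apply: leq_trans MB; rewrite ltnS; apply: leq_bigmax_cond; apply: (subsetP SB).
  by rewrite ffunE inordK // E.
apply: (@leq_bigmax_cond _ _ (fun c0 : {ffun T -> 'I_(#|B|.+1)} => nat_of_ord (c0 v)) cf).
by apply/existsP; exists (Ordinal MB).
Qed.

Lemma gamma_v_le (B : {set T}) v : v \in B -> gamma_v B e v <= gamma B e.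
Proof.
move=> vB; apply/bigmax_leqP => cf /existsP[k g].
apply: (@leq_trans k).
  by case/grundybP: g => /(_ v vB) /andP[_ ->] _ _ _.
by apply: (@leq_bigmax_cond _ _ (fun i : 'I_(#|B|.+1) => nat_of_ord i) k); apply/existsP; exists cf.
Qed.

Lemma gamma_le (B : {set T}) : gamma B e <= gamma [set: T] e.
Proof.
apply/bigmax_leqP => k /existsP[cf g].
case: (set_0Vmem B) => [B0|[v vB]].
  have kb := grundy_bound g; have h : #|B| = 0 by rewrite B0 cards0.
  have -> : (k : nat) = 0 by lia.
  by [].
by case: (mono_gamma (subsetT B) g vB).
Qed.


Definition rs (f : rel T) (S : {set T}) : rel T := fun a b => [&& f a b, a \in S & b \in S].

Lemma Delta_ge a b : e a b -> deg e b <= deg e a -> deg e b <= Delta e a.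
Proof.
move=> eab le.
by apply: (@leq_bigmax_cond _ (fun v => e a v && (deg e v <= deg e a)) (deg e) b); rewrite eab le.
Qed.

Definition Dset (f : rel T) (c : T -> nat) y := ball (dr f c) y (c y).
Definition Nset (S : {set T}) (f : rel T) (c : T -> nat) u k := [set y in S | f u y && (c y < k - 1)].

Ltac slia := repeat (match goal with H : ?P |- _ =>
   lazymatch P with
   | is_true (leq _ _) => fail
   | is_true (_ != _) => fail
   | is_true (_ == _) => fail
   | is_true (_ && _) => fail
   | @eq nat _ _ => fail
   | _ => clear H
   end end); lia.

Lemma core c k u (S : {set T}) (f : rel T) :
  grundyb [set: T] e k c -> c u = k -> subgraph e S f -> u \in S -> grundyb S f k c ->
  exists S1 : {set T},
    [/\ S1 \subset S, u \in S1, grundyb S1 (rs f S1) k c,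
        S1 \subset ball e u (k - 1) & k - 1 <= deg e u] /\
    (S1 \subset ball e u (Delta e u) \/
     exists w, [/\ e u w, w \in S1, S1 \subset ball e w (Delta e w) &
       grundyb S1 (rs f S1) k (fun x => if x == u then k - 1 else if x == w then k else c x)]).
Proof.
move=> gG cu [fsym fS] uS gS.
have fe : forall a b, f a b -> e a b by move=> a b /fS[].
have fin : forall a b, f a b -> a \in S /\ b \in S by move=> a b /fS[].
case/grundybP: (gS) => S1c S2c S3c S4c.
case/grundybP: (gG) => G1 G2 G3 G4.
clear gG gS.
have degu : k - 1 <= deg e u.
  apply: (count_lb (h := c)) => i /andP[i0 ik].
  have [|y _ [euy cy]] := G4 u i (in_setT u); first by rewrite cu i0 /=; slia.
  by exists y; rewrite // inE.
have : k = 0 \/ k = 1 \/ 1 < k by slia.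
case=> [k0|[k1|k2]].
  by case/andP: (S1c u uS); rewrite cu k0.
  exists [set u]; split; last by left; rewrite sub1set ball_center.
  split => //; first by rewrite sub1set.
  - exact: set11.
  - apply/grundybP; split.
    + by move=> x /set1P->; rewrite cu k1.
    + move=> i; rewrite k1 => Hi; exists u; [exact: set11 | rewrite cu; slia].
    + move=> x y /set1P-> /set1P->; case/and3P=> fuu _ _.
      by have := fe _ _ fuu; rewrite e_irr.
    + by move=> x i /set1P->; rewrite cu k1 => /andP[]; case: i.
  - by rewrite sub1set ball_center.
have [w wS [fuw cw]] : exists2 w, w \in S & f u w /\ c w = k - 1.
  by apply: (S4c) => //; rewrite cu; slia.
have euw := fe _ _ fuw.
have wu : (w == u) = false by apply/eqP=> wu; rewrite wu e_irr in euw.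
pose S1 := u |: ((Dset f c w) :|: \bigcup_(y in (Nset S f c u k)) (Dset f c y)).
have DS : forall y x, y \in S -> x \in (Dset f c y) -> x \in S.
  move=> y x yS; apply: (ball_ind (P := fun x => x \in S)) => // a b _ /andP[/fin[]].
  by [].
have inS1 : forall x, x \in S1 ->
    x = u \/ x \in (Dset f c w) \/ exists2 y, y \in (Nset S f c u k) & x \in (Dset f c y).
  move=> x; rewrite in_setU1 in_setU => /orP[/eqP->|/orP[xw|/bigcupP[y yN xy]]].
  - by left.
  - by right; left.
  - by right; right; exists y.
have memDw : forall x, x \in (Dset f c w) -> x \in S1.
  by move=> x xD; rewrite in_setU1 in_setU xD orbT.
have memDN : forall y x, y \in (Nset S f c u k) -> x \in (Dset f c y) -> x \in S1.
  move=> y x yN xD; rewrite in_setU1 in_setU; apply/orP; right; apply/orP; right.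
  by apply/bigcupP; exists y.
have uS1 : u \in S1 by rewrite in_setU1 eqxx.
clearbody S1.
have wS1 : w \in S1 by apply: (memDw); apply: ball_center.
have S1S : S1 \subset S.
  apply/subsetP=> x /inS1 [->//|[xD|[y]]]; first exact: DS xD.
  by rewrite /Nset inE => /andP[yS _]; apply: DS.
have NS1 : forall y, y \in S -> f u y -> c y < k - 1 -> y \in S1.
  move=> y yS fuy cy; apply: (memDN y); last exact: ball_center.
  by rewrite /Nset inE yS fuy cy.
have cS1 : forall x, x \in S1 -> x != u -> c x <= k - 1 /\ (c x = k - 1 -> x = w).
  move=> x /inS1 [->|[xD|[y yN xD]]]; first by rewrite eqxx.
    by move=> _; split; [rewrite -cw; apply: desc_le xD | rewrite -cw; apply: desc_eq xD].
  move: yN; rewrite /Nset inE => /and3P[_ _ cy] _.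
  have := desc_le xD; split; slia.
have closedS1 : forall x y, x \in S1 -> x != u -> f x y -> c y < c x -> y \in S1.
  move=> x y /inS1 [->|[xD|[z zN xD]]]; first by rewrite eqxx.
    move=> _ fxy cyx; apply: (memDw); apply: (desc_closed xD).
      by case/andP: (S1c x (subsetP S1S x (memDw x xD))).
    by rewrite /dr fxy cyx.
  move=> _ fxy cyx; apply: (memDN z) => //; apply: (desc_closed xD).
    by case/andP: (S1c x (subsetP S1S x (memDN z x zN xD))).
  by rewrite /dr fxy cyx.
have gS1 : grundyb S1 (rs f S1) k c.
  apply/grundybP; split.
  - by move=> x /(subsetP S1S) /S1c.
  - move=> i /andP[i0 ik].
    have [ek|nk] := eqVneq i k; first by exists u; rewrite // cu ek.
    have [ek1|nk1] := eqVneq i (k - 1); first by exists w; rewrite // cw ek1.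
    have [|y yS [fuy cy]] := S4c u i uS; first by rewrite cu; clear -i0 ik nk k2; slia.
    exists y => //; apply: (NS1) => //; slia.
  - move=> x y xS yS /and3P[fxy _ _].
    by apply: (S3c) => //; apply: (subsetP S1S).
  - move=> x i xS1 /andP[i0 ix].
    have [xu|xu] := eqVneq x u.
      move: ix; rewrite xu cu => ik.
      have [ek1|nk1] := eqVneq i (k - 1).
        by exists w => //; rewrite /rs fuw uS1 wS1 cw ek1.
      have [|y yS [fuy cy]] := S4c u i uS; first by rewrite cu; slia.
      have yS1 : y \in S1 by apply: (NS1) => //; slia.
      by exists y => //; rewrite /rs fuy uS1 yS1.
    have [|y yS [fxy cy]] := S4c x i (subsetP S1S x xS1); first by rewrite i0 ix.
    have yS1 : y \in S1 by apply: (closedS1 x) => //; rewrite cy.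
    by exists y => //; rewrite /rs fxy xS1 yS1.
have Bu : S1 \subset ball e u (k - 1).
  apply/subsetP=> x /inS1 [->|[xD|[y yN xD]]]; first exact: ball_center.
    have x0 : 0 < c x by case/andP: (S1c x (subsetP S1S x (memDw x xD))).
    have := ball_trans (ball_step (ball_center e u 0) euw) (desc_dist fe xD x0).
    rewrite cw; have -> : 0 + 1 + (k - 1 - 1) = k - 1 by slia. by [].
  have x0 : 0 < c x by case/andP: (S1c x (subsetP S1S x (memDN y x yN xD))).
  move: yN; rewrite /Nset inE => /and3P[yS fuy cy].
  have := ball_trans (ball_step (ball_center e u 0) (fe _ _ fuy)) (desc_dist fe xD x0).
  have le : 0 + 1 + (c y - 1) <= k - 1 by slia.
  by apply: (subsetP (ball_mono _ _ le)).
have Bw : S1 \subset ball e w (k - 1).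
  have ewu : e w u by rewrite e_sym.
  have uBw : u \in ball e w 1 := ball_step (ball_center e w 0) ewu.
  apply/subsetP=> x /inS1 [->|[xD|[y yN xD]]].
  - have le : 1 <= k - 1 by slia.
    by apply: (subsetP (ball_mono _ _ le)).
  - have x0 : 0 < c x by case/andP: (S1c x (subsetP S1S x (memDw x xD))).
    have := desc_dist fe xD x0; rewrite cw.
    have le : k - 1 - 1 <= k - 1 by slia.
    by apply: (subsetP (ball_mono _ _ le)).
  - have x0 : 0 < c x by case/andP: (S1c x (subsetP S1S x (memDN y x yN xD))).
    move: yN; rewrite /Nset inE => /and3P[yS fuy cy].
    have := ball_trans (ball_step uBw (fe _ _ fuy)) (desc_dist fe xD x0).
    have y0 : 0 < c y by case/andP: (S1c y yS).
    have le : 1 + 1 + (c y - 1) <= k - 1 by slia.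
    by apply: (subsetP (ball_mono _ _ le)).
have degw : k - 1 <= deg e w.
  apply: (count_lb (h := fun x => if x == u then k - 1 else c x)) => i /andP[i0 ik].
  have [ek1|nk1] := eqVneq i (k - 1).
    by exists u; rewrite ?inE ?eqxx // e_sym.
  have [|y _ [ewy cy]] := G4 w i (in_setT w); first by rewrite cw i0 /=; slia.
  exists y; first by rewrite inE.
  by have [yu|//] := eqVneq y u; move: cy; rewrite yu cu; slia.
exists S1; split => //.
have [dwu|duw] := leqP (deg e w) (deg e u).
  left; apply: subset_trans Bu (ball_mono _ _ _).
  by apply: leq_trans degw (Delta_ge euw dwu).
right; exists w; split => //.
  apply: subset_trans Bw (ball_mono _ _ _).
  by apply: leq_trans degu (Delta_ge (_ : e w u) (ltnW duw)); rewrite e_sym.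
set c' := fun x => if x == u then k - 1 else if x == w then k else c x.
have cls : forall x, x \in S1 ->
    [\/ x = u /\ c' x = k - 1, x = w /\ c' x = k |
        [/\ x != u, x != w, c' x = c x & c x < k - 1]].
  move=> x xS1; rewrite /c'.
  have [->|xu] := eqVneq x u; first by constructor 1.
  have [->|xw] := eqVneq x w; first by constructor 2.
  constructor 3; split => //.
  have [H1 H2] := cS1 x xS1 xu.
  by rewrite ltn_neqAle H1 andbT; apply/eqP=> /H2 /eqP; rewrite (negbTE xw).
have c'u : c' u = k - 1 by rewrite /c' eqxx.
have c'w : c' w = k by rewrite /c' wu eqxx.
have c'o : forall y, y \in S1 -> c y < k - 1 -> c' y = c y.
  move=> y yS1 cy; case: (cls y yS1) => [[yu _]|[yw _]|[_ _ -> _]] //.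
    by move: cy; rewrite yu cu; slia.
  by move: cy; rewrite yw cw; slia.
apply/grundybP; split.
- move=> x xS1; case: (cls x xS1) => [[_ ->]|[_ ->]|[_ _ -> _]].
  + by apply/andP; split; slia.
  + by apply/andP; split; slia.
  + by apply: S1c; apply: (subsetP S1S).
- move=> i /andP[i0 ik].
  have [ek|nk] := eqVneq i k; first by exists w; rewrite // c'w ek.
  have [ek1|nk1] := eqVneq i (k - 1); first by exists u; rewrite // c'u ek1.
  have [|y yS [fuy cy]] := S4c u i uS; first by rewrite cu; slia.
  have cyk : c y < k - 1 by slia.
  have yS1 : y \in S1 by apply: (NS1).
  by exists y => //; rewrite c'o.
- move=> x y xS yS /and3P[fxy _ _].
  have exy := fe _ _ fxy.
  have [xy|xy] := eqVneq x y; first by rewrite xy e_irr in exy.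
  case: (cls x xS) => [[xu ->]|[xw ->]|[xu xw -> cx]];
  case: (cls y yS) => [[yu ->]|[yw ->]|[yu yw -> cy]];
  try (by rewrite xu yu eqxx in xy); try (by rewrite xw yw eqxx in xy); try slia.
  exact: S3c (subsetP S1S x xS) (subsetP S1S y yS) fxy.
- move=> x i xS1 /andP[i0 ix].
  case: (cls x xS1) => [[xu cx]|[xw cx]|[xu xw cx' cxk]].
  + move: ix; rewrite cx xu => ik.
    have [|y yS [fuy cy]] := S4c u i uS; first by rewrite cu; slia.
    have cyk : c y < k - 1 by slia.
    have yS1 : y \in S1 by apply: (NS1).
    by exists y; rewrite ?c'o // /rs fuy uS1 yS1.
  + move: ix; rewrite cx xw => ik.
    have [ek1|nk1] := eqVneq i (k - 1).
      by exists u; rewrite ?c'u // /rs fsym fuw uS1 wS1.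
    have [|y yS [fwy cy]] := S4c w i wS; first by rewrite cw; slia.
    have cyk : c y < k - 1 by slia.
    have wnu : w != u by rewrite wu.
    have yS1 : y \in S1 by apply: (closedS1 w) => //; rewrite cw.
    by exists y; rewrite ?c'o // /rs fwy wS1 yS1.
  + move: ix; rewrite cx' => ix.
    have [|y yS [fxy cy]] := S4c x i (subsetP S1S x xS1); first by rewrite i0 ix.
    have cyk : c y < k - 1 by slia.
    have yS1 : y \in S1 by apply: (closedS1 x) => //; rewrite cy.
    by exists y; rewrite ?c'o // /rs fxy xS1 yS1.
Qed.

End Ext.

Theorem proposition8 (T : finType) (e : rel T)
    (e_sym : symmetric e) (e_irr : irreflexive e) :
  (* (i) *)
  (forall (c : T -> nat) (k : nat) (u : T),
     grundyb [set: T] e k c -> c u = k ->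
     forall (S : {set T}) (f : rel T),
       subgraph e S f -> u \in S -> grundyb S f k c ->
       (forall (S' : {set T}) (f' : rel T),
          subgraph e S' f' -> u \in S' -> grundyb S' f' k c -> #|S| <= #|S'|) ->
       [/\ S \subset ball e u (k - 1),
           ball e u (k - 1) \subset ball e u (deg e u) &
           (S \subset ball e u (Delta e u) \/
            exists w, e u w /\ S \subset ball e w (Delta e w))])
  /\
  (* (ii) *)
  (gamma [set: T] e = \max_(v : T) gamma (Gset e v) e /\
   gamma [set: T] e = \max_(v : T) gamma_v (Gset e v) e v).
Proof.
split.
  move=> c k u gG cu S f sg uS gS minS.
  have [S1 [[S1S uS1 g1 Bu degu] disj]] := core e_sym e_irr gG cu sg uS gS.
  have sg1 : subgraph e S1 (rs f S1).
    case: sg => fsym fS; split.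
      move=> a b; rewrite /rs fsym.
      by case: (a \in S1); case: (b \in S1); rewrite ?andbT ?andbF.
    move=> a b /and3P[fab aS bS]; split => //.
    by case: (fS a b fab).
  have le := minS _ _ sg1 uS1 g1.
  have E : S1 = S by apply/eqP; rewrite eqEcard S1S le.
  rewrite -E; split => //; first exact: ball_mono degu.
  case: disj => [H|[w [euw _ H _]]]; [by left | by right; exists w].
have key : forall k (c : T -> nat), grundyb [set: T] e k c ->
    k <= \max_(v : T) gamma (Gset e v) e /\ k <= \max_(v : T) gamma_v (Gset e v) e v.
  move=> k c gG.
  case: k gG => [|k] gG; first by [].
  have [u _ cu] : exists2 u, u \in [set: T] & c u = k.+1.
    by case/grundybP: (gG) => _ H _ _; apply: H; rewrite leqnn.
  have sgT : subgraph e [set: T] e.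
    by split => // a b eab; rewrite !inE.
  have [S1 [[S1S uS1 g1 Bu degu] disj]] := core e_sym e_irr gG cu sgT (in_setT u) gG.
  have rsE : forall c', grundyb S1 (rs e S1) k.+1 c' -> grundyb S1 e k.+1 c'.
    move=> c'; apply: grundyb_ext => // a b aS bS; by rewrite /rs aS bS !andbT.
  case: disj => [H|[w [euw wS1 H g2]]].
    have [h1 h2] := mono_gamma e_sym e_irr H (rsE _ g1) uS1.
    split.
      exact: leq_trans h1 (leq_bigmax (F := fun v => gamma (Gset e v) e) u).
    rewrite -cu; exact: leq_trans h2 (leq_bigmax (F := fun v => gamma_v (Gset e v) e v) u).
  have [h1 h2] := mono_gamma e_sym e_irr H (rsE _ g2) wS1.
  have wu : (w == u) = false by apply/eqP=> wu; rewrite wu e_irr in euw.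
  move: h2; rewrite /= wu eqxx => h2.
  split.
    exact: leq_trans h1 (leq_bigmax (F := fun v => gamma (Gset e v) e) w).
  exact: leq_trans h2 (leq_bigmax (F := fun v => gamma_v (Gset e v) e v) w).
have up1 : gamma [set: T] e <= \max_(v : T) gamma (Gset e v) e.
  by apply/bigmax_leqP => k /existsP[cf g]; case: (key _ _ g).
have up2 : gamma [set: T] e <= \max_(v : T) gamma_v (Gset e v) e v.
  by apply/bigmax_leqP => k /existsP[cf g]; case: (key _ _ g).
split; apply/eqP; rewrite eqn_leq.
  rewrite up1 /=; apply/bigmax_leqP => v _; exact: gamma_le.
rewrite up2 /=; apply/bigmax_leqP => v _.
apply: leq_trans (gamma_v_le e (ball_center _ _ _)) (gamma_le e_sym e_irr _).
Qed.
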